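(* In a search game (as defined in the context), for a mixed outcome $f:\Omega\to[0,1]$ the following are equivalent: (i) $f$ can be induced by a lottery over pure strategy profiles; (ii) $f$ is compatible; (iii) $f$ can be generated by a fractional allocation, i.e., $f=f_\alpha$ for some fractional allocation $\alpha$.
   Context: A search game has a finite set of players $N=\{1,\ldots,n\}$, a finite set $\Omega$ of locations, for each player $i$ a partition $\Pi_i$ of $\Omega$ (with $\pi_i(\omega)$ the cell containing $\omega$) and a capacity $K_i\in\mathbb{N}$ (other ingredients such as prior, costs and rewards are irrelevant here). A pure strategy $s_i$ assigns to each cell $\pi_i\in\Pi_i$ a subset $s_i(\pi_i)\subseteq\pi_i$ with at most $K_i$ elements; a pure profile is $s=(s_1,\ldots,s_n)$, and $m_s(\omega)=\sum_{i\in N}\mathbf{1}_{\omega\in s_i(\pi_i(\omega))}$. A mixed outcome is a function $f:\Omega\to[0,1]$. A lottery over pure profiles (a probability distribution $\sigma$ over the finite set of pure profiles) induces the mixed outcome $f(\omega)=\sigma(\{s: m_s(\omega)\ge1\})$. A mixed outcome $f$ is compatible if for every $W\subseteq\Omega$: $\sum_{\omega\in W}f(\omega)\le\sum_{i\in N}K_i\cdot|\{\pi_i\in\Pi_i:\pi_i\cap W\ne\emptyset\}|$. A fractional allocation $\alpha=(\alpha_1,\ldots,\alpha_n)$ specifies a number $\alpha_i(\pi_i,\omega)\ge0$ for every player $i$, cell $\pi_i\in\Pi_i$ and $\omega\in\pi_i$, such that $\sum_{\omega\in\pi_i}\alpha_i(\pi_i,\omega)\le K_i$ for every cell $\pi_i$;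 it generates the mixed outcome $f_\alpha(\omega)=\min\big(1,\sum_{i\in N}\alpha_i(\pi_i(\omega),\omega)\big)$. *)

(* Defs.v *)
From HB Require Import structures.
From mathcomp Require Import all_boot all_order all_algebra.
From mathcomp Require Import reals.
Set Implicit Arguments. Unset Strict Implicit. Unset Printing Implicit Defensive.
Import Order.TTheory GRing.Theory Num.Theory.
Local Open Scope ring_scope.

(* Players are 'I_n, locations a finType Omega.  Player i's information
   partition is Pi i : {set {set Omega}} (with partition (Pi i) [set: Omega]),
   the cell containing w is pblock (Pi i) w, the capacity is K i. *)

Definition profile (n : nat) (Omega : finType) :=
  {ffun 'I_n -> {ffun {set Omega} -> {set Omega}}}.

(* s is a pure strategy profile: s_i(C) is a subset of C of size <= K_i
   for every cell C of Pi_i (values on non-cells are irrelevant). *)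
Definition pure_profile (n : nat) (Omega : finType)
  (Pi : 'I_n -> {set {set Omega}}) (K : 'I_n -> nat) (s : profile n Omega) :=
  forall i : 'I_n, forall C, C \in Pi i -> (s i C \subset C) /\ (#|s i C| <= K i)%N.

Definition searched (n : nat) (Omega : finType)
  (Pi : 'I_n -> {set {set Omega}}) (s : profile n Omega) (w : Omega) : bool :=
  [exists i : 'I_n, w \in s i (pblock (Pi i) w)].

Definition lottery (R : realType) (n : nat) (Omega : finType)
  (Pi : 'I_n -> {set {set Omega}}) (K : 'I_n -> nat)
  (sigma : {ffun profile n Omega -> R}) :=
  (forall s, 0 <= sigma s) /\ (\sum_s sigma s = 1) /\
  (forall s, sigma s != 0 -> pure_profile Pi K s).

Definition induced (R : realType) (n : nat) (Omega : finType)
  (Pi : 'I_n -> {set {set Omega}}) (sigma : {ffun profile n Omega -> R})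
  (w : Omega) : R :=
  \sum_(s | searched Pi s w) sigma s.

Definition compatible (R : realType) (n : nat) (Omega : finType)
  (Pi : 'I_n -> {set {set Omega}}) (K : 'I_n -> nat) (f : Omega -> R) :=
  forall W : {set Omega},
    \sum_(w in W) f w <=
    \sum_(i < n) (K i)%:R * #|[set C in Pi i | C :&: W != set0]|%:R.

Definition fractional_allocation (R : realType) (n : nat) (Omega : finType)
  (Pi : 'I_n -> {set {set Omega}}) (K : 'I_n -> nat)
  (alpha : 'I_n -> {set Omega} -> Omega -> R) :=
  forall i : 'I_n, forall C, C \in Pi i ->
    (forall w, w \in C -> 0 <= alpha i C w) /\
    \sum_(w in C) alpha i C w <= (K i)%:R.

Definition generated (R : realType) (n : nat) (Omega : finType)
  (Pi : 'I_n -> {set {set Omega}}) (alpha : 'I_n -> {set Omega} -> Omega -> R)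
  (w : Omega) : R :=
  Num.min 1 (\sum_(i < n) alpha i (pblock (Pi i) w) w).

(* Main.v *)
Require Import Defs.
From HB Require Import structures.
From mathcomp Require Import all_boot all_order all_algebra.
From mathcomp Require Import reals.
From mathcomp Require Import ring lra zify.
Set Implicit Arguments. Unset Strict Implicit. Unset Printing Implicit Defensive.
Import Order.TTheory GRing.Theory Num.Theory.
Local Open Scope ring_scope.

Section Gen.
Variable R : realFieldType.

Lemma sum_sub_mono (T : finType) (A B : {set T}) (F : T -> R) :
  (forall i, 0 <= F i) -> A \subset B -> \sum_(i in A) F i <= \sum_(i in B) F i.
Proof.
move=> F0 sAB; rewrite (@big_setID _ _ _ _ B A) /=.
have -> : B :&: A = A by apply/setIidPr.
by rewrite lerDl sumr_ge0.
Qed.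

Lemma sum_if_sub (T : finType) (A : {set T}) (a : T) (g : T -> R) (v : R) :
  \sum_(i in A) (if i == a then g i - v else g i) =
  \sum_(i in A) g i - (if a \in A then v else 0).
Proof.
case: ifP => aA.
  rewrite (bigD1 a) //= eqxx [in RHS](bigD1 a) //=.
  rewrite (eq_bigr g); first by rewrite addrAC.
  by move=> i /andP[_ /negbTE ->].
rewrite subr0; apply: eq_bigr => i iA; case: eqP => // ia.
by move: aA; rewrite -ia iA.
Qed.

Lemma sum_if_eq (T : finType) (a : T) (v : R) :
  \sum_i (if i == a then v else 0) = v.
Proof. by rewrite -big_mkcond big_pred1_eq. Qed.

End Gen.


Section Hall.
Variable R : realFieldType.
Variables (S Om : finType) (adj : S -> Om -> bool).

Definition Nb (W : {set Om}) : {set S} := [set s | [exists w in W, adj s w]].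
Definition hallc (f : Om -> R) (c : S -> R) :=
  forall W : {set Om}, \sum_(w in W) f w <= \sum_(s in Nb W) c s.
Definition solc (f : Om -> R) (c : S -> R) (x : S -> Om -> R) :=
  [/\ (forall s w, 0 <= x s w), (forall s w, ~~ adj s w -> x s w = 0),
      (forall w, \sum_s x s w = f w) & (forall s, \sum_w x s w <= c s)].
Definition msr (f : Om -> R) (c : S -> R) :=
  addn #|[set w | f w != 0]| #|[set s | c s != 0]|.

Lemma Nb_sub (W X : {set Om}) : W \subset X -> Nb W \subset Nb X.
Proof.
move=> sWX; apply/subsetP => s; rewrite !inE => /existsP[w /andP[wW aw]].
by apply/existsP; exists w; rewrite (subsetP sWX).
Qed.

Lemma inNb s (W : {set Om}) : (s \in Nb W) = [exists w in W, adj s w].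
Proof. by rewrite inE. Qed.

Lemma sol_zero f c : (forall w, f w = 0) -> (forall s, 0 <= c s) ->
  exists x, solc f c x.
Proof.
move=> f0 c0; exists (fun _ _ => 0); split => //.
  by move=> w; rewrite big1 // f0.
by move=> s; rewrite big1.
Qed.

Lemma nat_aux (a b a2 b2 m : nat) : (a + b <= m.+1)%N -> (a2 < a)%N -> (b2 <= b)%N ->
  (a2 + b2 <= m)%N.
Proof. lia. Qed.

Lemma caseA m :
  (forall f c, (msr f c <= m)%N -> (forall w, 0 <= f w) -> (forall s, 0 <= c s) ->
     hallc f c -> exists x, solc f c x) ->
  forall f c (W : {set Om}), (msr f c <= m.+1)%N -> (forall w, 0 <= f w) ->
  (forall s, 0 <= c s) -> hallc f c ->
  (exists2 w, w \in W & f w != 0) -> (exists2 w, w \notin W & f w != 0) ->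
  \sum_(w in W) f w = \sum_(s in Nb W) c s -> exists x, solc f c x.
Proof.
move=> IH f c W hm hf hc hh [wa waW fwa] [wb wbW fwb] tight.
pose f1 w := if w \in W then f w else 0.
pose f2 w := if w \in W then 0 else f w.
pose c2 s := if s \in Nb W then 0 else c s.
have hf1 w : 0 <= f1 w by rewrite /f1; case: ifP.
have hf2 w : 0 <= f2 w by rewrite /f2; case: ifP.
have hc2 s : 0 <= c2 s by rewrite /c2; case: ifP.
have sf1 : [set w | f1 w != 0] \proper [set w | f w != 0].
  apply/properP; split.
    by apply/subsetP => w; rewrite !inE /f1; case: ifP => //; rewrite eqxx.
  by exists wb; rewrite !inE /f1 ?(negbTE wbW) ?eqxx.
have sf2 : [set w | f2 w != 0] \proper [set w | f w != 0].
  apply/properP; split.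
    by apply/subsetP => w; rewrite !inE /f2; case: ifP => //; rewrite eqxx.
  by exists wa; rewrite !inE /f2 ?waW ?eqxx.
have sc2 : [set s | c2 s != 0] \subset [set s | c s != 0].
  by apply/subsetP => s; rewrite !inE /c2; case: ifP => //; rewrite eqxx.
have [x1 [x1p x1a x1c x1r]] : exists x, solc f1 c x.
  apply: IH => //.
    rewrite /msr; move: hm; rewrite /msr => hm.
    exact: nat_aux hm (proper_card sf1) (leqnn _).
  move=> X; rewrite /f1 -big_mkcondr /=.
  rewrite (eq_bigl (fun w => w \in X :&: W)); last by move=> w; rewrite inE.
  apply: le_trans (hh _) _; apply: sum_sub_mono => //.
  by apply: Nb_sub; apply: subsetIl.
have [x2 [x2p x2a x2c x2r]] : exists x, solc f2 c2 x.
  apply: IH => //.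
    exact: nat_aux hm (proper_card sf2) (subset_leq_card sc2).
  move=> X; rewrite /f2.
  have -> : \sum_(w in X) (if w \in W then 0 else f w) = \sum_(w in X :\: W) f w.
    rewrite big_mkcond [RHS]big_mkcond; apply: eq_bigr => w _.
    by rewrite !inE; case: (w \in W); case: (w \in X).
  have -> : \sum_(s in Nb X) c2 s = \sum_(s in Nb X :\: Nb W) c s.
    rewrite big_mkcond [RHS]big_mkcond; apply: eq_bigr => s _.
    by rewrite /c2 in_setD; case: (s \in Nb W); case: (s \in Nb X).
  have := hh (X :|: W).
  rewrite (@big_setID _ _ _ _ (X :|: W) W) /=.
  have -> : (X :|: W) :&: W = W.
    by apply/setP => w; rewrite !inE; case: (w \in W); case: (w \in X).
  have -> : (X :|: W) :\: W = X :\: W.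
    by apply/setP => w; rewrite !inE; case: (w \in W); case: (w \in X).
  rewrite (@big_setID _ _ _ _ (Nb (X :|: W)) (Nb W)) /=.
  have -> : Nb (X :|: W) :&: Nb W = Nb W.
    by apply/setIidPr; apply: Nb_sub; apply: subsetUr.
  have -> : Nb (X :|: W) :\: Nb W = Nb X :\: Nb W.
    apply/setP => s; rewrite !in_setD; case sNW: (s \in Nb W) => //=.
    rewrite !inNb; apply/existsP/existsP => [[w /andP[]]|[w /andP[wX aw]]].
      rewrite inE => /orP[wX aw|wW aw]; first by exists w; rewrite wX.
      have: s \in Nb W by rewrite inNb; apply/existsP; exists w; rewrite wW aw.
      by rewrite sNW.
    by exists w; rewrite inE wX.
  rewrite tight; lra.
exists (fun s w => x1 s w + x2 s w); split.
- by move=> s w; rewrite addr_ge0.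
- by move=> s w naw; rewrite x1a // x2a // addr0.
- move=> w; rewrite big_split /= x1c x2c /f1 /f2; case: ifP => _; lra.
- move=> s; rewrite big_split /=.
  have := x1r s; have := x2r s; rewrite /c2; case: ifP => sNW.
    by have := hc s; lra.
  rewrite (_ : \sum_w x1 s w = 0) ?add0r //.
  apply: big1 => w _.
  case aw: (adj s w); last by rewrite x1a ?aw.
  have wW : w \notin W.
    apply/negP => wW; move: sNW; rewrite inNb => /negbT/negP; apply.
    by apply/existsP; exists w; rewrite wW aw.
  have h0 : \sum_s' x1 s' w = 0 by rewrite x1c /f1 (negbTE wW).
  by apply: (psumr_eq0P (fun i _ => x1p i w) h0).
Qed.

End Hall.

Lemma nat_aux2 (a b a2 b2 m : nat) : (a + b <= m.+1)%N -> (a2 <= a)%N -> (b2 < b)%N ->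
  (a2 + b2 <= m)%N.
Proof. lia. Qed.

Section HallMain.
Variable R : realFieldType.
Variables (S Om : finType) (adj : S -> Om -> bool).

Lemma hall_sol m : forall (f : Om -> R) (c : S -> R), (msr f c <= m)%N ->
  (forall w, 0 <= f w) -> (forall s, 0 <= c s) -> hallc adj f c ->
  exists x, solc adj f c x.
Proof.
elim: m => [|m IH] f c hm hf hc hh.
  apply: sol_zero => // w; apply/eqP/negPn/negP => fw.
  have: w \in [set w | f w != 0] by rewrite inE.
  move: hm; rewrite /msr leqn0 addn_eq0 => /andP[/eqP /card0_eq -> _].
  by [].
case: (pickP (fun w => f w != 0)) => [w0 fw0|hnone]; last first.
  by apply: sol_zero => // w; apply/eqP; move: (hnone w) => /negbFE.
have [s aw0 cs] : exists2 s, adj s w0 & 0 < c s.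
  case: (pickP (fun s => adj s w0 && (0 < c s))) => [s /andP[a b]|hn]; first by exists s.
  exfalso; have := hh [set w0]; rewrite big_set1.
  rewrite big1; last first.
    move=> s; rewrite inNb => /existsP[w /andP[]]; rewrite inE => /eqP -> a.
    have := hn s; rewrite a /= => /negbT; rewrite -leNgt => cs0.
    by apply/eqP; rewrite eq_le cs0 hc.
  move=> h; move: fw0; rewrite (_ : f w0 = 0) ?eqxx //.
  by apply/eqP; rewrite eq_le h hf.
pose supp := [set w | f w != 0].
pose Fam := [set U : {set Om} | [&& U \subset supp, w0 \notin U & s \in Nb adj U]].
pose slack (U : {set Om}) := \sum_(s in Nb adj U) c s - \sum_(w in U) f w.
pose t0 := Num.min (f w0) (c s).
pose t := \big[Num.min/t0]_(U in Fam) slack U.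
have tt0 : t <= t0 by apply: bigmin_le_id.
have tU : forall U, U \in Fam -> t <= slack U.
  by move=> U hU; apply: bigmin_le_cond.
have slack0 : forall U, 0 <= slack U by move=> U; rewrite subr_ge0 hh.
have t0ge : 0 <= t0 by rewrite /t0 le_min hf (ltW cs).
have tge : 0 <= t by apply: le_bigmin.
have tcase : (t == t0) || [exists U in Fam, t == slack U].
  rewrite /t; elim/big_rec: _ => [|U y hU ih]; first by rewrite eqxx.
  rewrite minEle; case: ifP => _; last exact: ih.
  by apply/orP; right; apply/existsP; exists U; rewrite hU eqxx.
pose f' w := if w == w0 then f w - t else f w.
pose c' s1 := if s1 == s then c s1 - t else c s1.
have tf : t <= f w0 by apply: le_trans tt0 _; rewrite /t0 ge_min lexx.
have tc : t <= c s by apply: le_trans tt0 _; rewrite /t0 ge_min lexx orbT.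
have hf' w : 0 <= f' w.
  by rewrite /f'; case: (w =P w0) => [->|_]; [rewrite subr_ge0 | ].
have hc' s1 : 0 <= c' s1.
  by rewrite /c'; case: (s1 =P s) => [->|_]; [rewrite subr_ge0 | ].
have hall' : hallc adj f' c'.
  move=> X; rewrite /f' /c' (sum_if_sub X w0 f t) (sum_if_sub (Nb adj X) s c t).
  case: ifP => w0X.
    have sX : s \in Nb adj X.
      by rewrite inNb; apply/existsP; exists w0; rewrite w0X aw0.
    rewrite sX; have := hh X; lra.
  rewrite subr0; case: ifP => sX; last by rewrite subr0 hh.
  pose U := X :&: supp.
  have eU : \sum_(w in X) f w = \sum_(w in U) f w.
    rewrite (@big_setID _ _ _ _ X supp) /= [X in _ + X]big1 ?addr0 //.
    by move=> w; rewrite !inE => /andP[]; rewrite negbK => /eqP.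
  rewrite eU.
  have w0U : w0 \notin U by rewrite inE w0X.
  have mono := sum_sub_mono hc (Nb_sub adj (subsetIl X supp)).
  case sU: (s \in Nb adj U).
    have UF : U \in Fam by rewrite inE subsetIr w0U sU.
    have := tU U UF; rewrite /slack; lra.
  have := hh U.
  have := sum_sub_mono hc' (Nb_sub adj (subsetIl X supp)).
  rewrite /c' (sum_if_sub (Nb adj U)) (sum_if_sub (Nb adj X)) sU sX; lra.
have [x' [x'p x'a x'c x'r]] : exists x, solc adj f' c' x.
  have s1 : [set w | f' w != 0] \subset [set w | f w != 0].
    by apply/subsetP => w; rewrite !inE /f'; case: (w =P w0) => [->|//] _.
  have s2 : [set s | c' s != 0] \subset [set s | c s != 0].
    apply/subsetP => s3; rewrite !inE /c'; case: (s3 =P s) => [->|//] _.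
    by rewrite eq_sym lt_eqF.
  have hm' : (msr f' c' <= m.+1)%N.
    exact: leq_trans (leq_add (subset_leq_card s1) (subset_leq_card s2)) hm.
  case: (eqVneq t (f w0)) => [tfw|tfw].
    apply: (IH f' c' _ hf' hc' hall').
    apply: nat_aux hm _ (subset_leq_card s2); apply: proper_card.
    apply/properP; split; first exact: s1.
    exists w0; first by rewrite inE.
    by rewrite inE /f' eqxx tfw subrr eqxx.
  case: (eqVneq t (c s)) => [tcs|tcs].
    apply: (IH f' c' _ hf' hc' hall').
    apply: nat_aux2 hm (subset_leq_card s1) _; apply: proper_card.
    apply/properP; split; first exact: s2.
    exists s; first by rewrite inE lt0r_neq0.
    by rewrite inE /c' eqxx tcs subrr eqxx.
  have [U UF tU'] : exists2 U, U \in Fam & t = slack U.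
    move: tcase; case/orP => [/eqP|/existsP[U /andP[UF /eqP ->]]]; last by exists U.
    by rewrite /t0 minEle; case: ifP => _ e; [move: tfw | move: tcs]; rewrite e eqxx.
  move: UF; rewrite inE => /and3P[Usupp w0U sU].
  apply: (@caseA _ _ _ adj m IH f' c' U hm' hf' hc' hall').
  - move: sU; rewrite inNb => /existsP[w /andP[wU _]]; exists w => //.
    rewrite /f'; case: (w =P w0) => [ew|_]; first by move: w0U; rewrite -ew wU.
    by move: (subsetP Usupp w wU); rewrite inE.
  - by exists w0 => //; rewrite /f' eqxx subr_eq0 eq_sym.
  - rewrite /f' /c' (sum_if_sub U) (sum_if_sub (Nb adj U)) (negbTE w0U) sU subr0.
    rewrite tU' /slack; lra.
exists (fun s1 w => x' s1 w + (if (s1 == s) && (w == w0) then t else 0)); split.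
- by move=> s1 w; rewrite addr_ge0 //; case: ifP.
- move=> s1 w na; rewrite x'a //.
  case: andP => [[/eqP e1 /eqP e2]|_]; last by rewrite addr0.
  by move: na; rewrite e1 e2 aw0.
- move=> w; rewrite big_split /= x'c /f'.
  case: (w =P w0) => [->|nw].
    rewrite (eq_bigr (fun s1 => if s1 == s then t else 0)) ?sum_if_eq ?subrK //.
    by move=> s1 _; rewrite andbT.
  rewrite big1 ?addr0 //.
  by move=> s1 _; rewrite andbF.
- move=> s1; rewrite big_split /=.
  have := x'r s1; rewrite /c'.
  case: (s1 =P s) => [->|ns].
    rewrite [X in _ + X <= _](eq_bigr (fun w => if w == w0 then t else 0)) ?sum_if_eq; first lra.
    by move=> w _.
  rewrite [X in _ + X <= _]big1 ?addr0 //.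
Qed.

End HallMain.


Lemma kernel_ex (R : fieldType) (E J : finType) (F : {set E}) (Js : {set J})
  (A : J -> E -> R) : (#|Js| < #|F|)%N ->
  exists d : E -> R, [/\ (forall e, e \notin F -> d e = 0), (exists e, d e != 0)
     & (forall j, j \in Js -> \sum_e A j e * d e = 0)].
Proof.
move=> hlt.
have [e0 e0F] : exists e0, e0 \in F.
  by apply/card_gt0P; apply: leq_ltn_trans hlt.
pose M : 'M[R]_(#|F|, #|Js|) := \matrix_(a, b) A (enum_val b) (enum_val a).
have rk : (0 < \rank (kermx M))%N.
  by rewrite mxrank_ker; have := rank_leq_col M; lia.
have nz : kermx M != 0 by apply: contraTneq rk => ->; rewrite mxrank0.
have /existsP[i /existsP[j hij]] : [exists i, exists j, kermx M i j != 0].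
  apply: contraR nz => /existsPn h; apply/eqP/matrixP => i j.
  by move: (h i) => /existsPn /(_ j) /negPn /eqP ->; rewrite mxE.
pose u := row i (kermx M).
have uM : u *m M = 0 by rewrite -row_mul mulmx_ker row0.
pose d e := if e \in F then u 0 (enum_rank_in e0F e) else 0.
exists d; split.
- by move=> e /negbTE eF; rewrite /d eF.
- exists (enum_val j); rewrite /d enum_valP enum_valK_in mxE //.
- move=> b bJs.
  rewrite (bigID (fun e => e \in F)) /= [X in _ + X]big1 ?addr0; last first.
    by move=> e /negbTE eF; rewrite /d eF mulr0.
  rewrite big_enum_val /=.
  transitivity ((u *m M) 0 (enum_rank_in bJs b)); last by rewrite uM mxE.
  rewrite mxE; apply: eq_bigr => a _.
  by rewrite /d enum_valP enum_valK_in /M !mxE enum_rankK_in // mulrC.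
Qed.


Section Decomp.
Variables (R : realType) (n : nat) (Omega : finType).
Variables (Pi : 'I_n -> {set {set Omega}}) (K : 'I_n -> nat).
Hypothesis hPi : forall i, partition (Pi i) [set: Omega].

Local Notation E := ('I_n * Omega)%type.
Local Notation SL := ('I_n * {set Omega})%type.
Local Notation J := (SL + Omega)%type.

Definition slot (e : E) : SL := (e.1, pblock (Pi e.1) e.2).
Definition inc (v : J) (e : E) : bool :=
  match v with inl p => slot e == p | inr w => e.2 == w end.
Definition cap (v : J) : nat := match v with inl p => K p.1 | inr _ => 1%N end.
Definition deg (x : E -> R) (v : J) : R := \sum_(e | inc v e) x e.
Definition feas (x : E -> R) :=
  (forall e, 0 <= x e) /\ (forall v, deg x v <= (cap v)%:R).
Definition Fr (x : E -> R) := [set e | (0 < x e) && (x e < 1)].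
Definition NT (x : E -> R) := [set v | deg x v != (cap v)%:R].
Definition mu (x : E -> R) := addn #|Fr x| #|NT x|.

Lemma deg_inr x w : deg x (inr w) = \sum_i x (i, w).
Proof.
rewrite /deg /=.
transitivity (\sum_(p | xpredT p.1 && (p.2 == w)) x (p.1, p.2)).
  by apply: eq_big => [[i w']|[i w']].
rewrite -(pair_big_dep xpredT (fun _ w' => w' == w) (fun i w' => x (i, w'))) /=.
by apply: eq_bigr => i _; rewrite big_pred1_eq.
Qed.

Lemma deg_inl x i C : deg x (inl (i, C)) = \sum_(w | pblock (Pi i) w == C) x (i, w).
Proof.
rewrite /deg /= /slot.
transitivity (\sum_(p | (p.1 == i) && (pblock (Pi p.1) p.2 == C)) x (p.1, p.2)).
  by apply: eq_big => [[j w']|[j w']] //=; rewrite xpair_eqE.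
rewrite -(pair_big_dep (pred1 i) (fun j w' => pblock (Pi j) w' == C) (fun j w' => x (j, w'))) /=.
by rewrite big_pred1_eq.
Qed.

Lemma degL y d b v : deg (fun e => y e + b * d e) v = deg y v + b * deg d v.
Proof. by rewrite /deg big_split mulr_sumr. Qed.

Lemma degN d v : deg (fun e => - d e) v = - deg d v.
Proof. by rewrite /deg sumrN. Qed.

Lemma edge_le1 x e : feas x -> x e <= 1.
Proof.
move=> [xp xc]; have := xc (inr e.2); rewrite /deg /= (bigD1 e) //=.
have : 0 <= \sum_(i | (i.2 == e.2) && (i != e)) x i by apply: sumr_ge0.
lra.
Qed.

Lemma sum_inl d : \sum_p deg d (inl p) = \sum_e d e.
Proof.
by rewrite [RHS](partition_big slot xpredT).
Qed.

Lemma sum_inr d : \sum_w deg d (inr w) = \sum_e d e.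
Proof.
by rewrite [RHS](partition_big snd xpredT).
Qed.

Lemma cov i : cover (Pi i) = [set: Omega].
Proof. by case/and3P: (hPi i) => /eqP. Qed.

Lemma memp i w : w \in pblock (Pi i) w.
Proof. by rewrite mem_pblock cov inE. Qed.

Lemma base x : feas x -> Fr x = set0 ->
  exists sigma : {ffun profile n Omega -> R},
    lottery Pi K sigma /\ forall w, induced Pi sigma w = deg x (inr w).
Proof.
move=> hx F0; have [xp xc] := hx.
have x01 e : (x e = 0) \/ (x e = 1).
  have : e \notin Fr x by rewrite F0 inE.
  rewrite inE negb_and -!leNgt => /orP[h|h]; [left | right]; apply/eqP.
    by rewrite eq_le h xp.
  by rewrite eq_le h edge_le1.
pose s0 : profile n Omega :=
  [ffun i => [ffun C => [set w | (pblock (Pi i) w == C) && (x (i, w) == 1)]]].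
pose sigma : {ffun profile n Omega -> R} := [ffun s => if s == s0 then 1 else 0].
exists sigma; split.
  split; [|split].
  - by move=> s; rewrite ffunE; case: ifP.
  - rewrite (eq_bigr (fun s => if s == s0 then 1 else 0)) ?sum_if_eq // => s _.
    by rewrite ffunE.
  - move=> s; rewrite ffunE; case: (s =P s0) => [-> _ i C CP|]; last by rewrite eqxx.
    rewrite !ffunE; split.
      by apply/subsetP => w; rewrite inE => /andP[/eqP <- _]; apply: memp.
    pose A := [set w | (pblock (Pi i) w == C) && (x (i, w) == 1)].
    have : (#|A|)%:R <= (K i)%:R :> R.
      apply: le_trans (xc (inl (i, C))); rewrite deg_inl.
      have -> : (#|A|)%:R = \sum_(w in A) (1 : R) by rewrite sumr_const.
      rewrite big_mkcond [X in _ <= X]big_mkcond le_eqVlt; apply/orP; left.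
      apply/eqP; apply: eq_bigr => w _; rewrite inE.
      case: (pblock (Pi i) w == C) => //=.
      by case: (x01 (i, w)) => ->; rewrite ?eqxx // eq_sym oner_eq0.
    by rewrite ler_nat.
move=> w; rewrite /induced.
have sS : searched Pi s0 w = [exists i, x (i, w) == 1].
  by apply: eq_existsb => i; rewrite !ffunE inE eqxx.
rewrite (eq_bigr (fun s => if s == s0 then 1 else 0)); last by move=> s _; rewrite ffunE.
case: (boolP (searched Pi s0 w)) => hs.
  rewrite (bigD1 s0) //= eqxx big1 ?addr0; last by move=> s /andP[_ /negbTE ->].
  move: hs; rewrite sS => /existsP[i /eqP xi].
  have := xc (inr w); rewrite /= deg_inr => h1.
  apply/eqP; rewrite eq_le h1 andbT.
  have : 0 <= \sum_(j | j != i) x (j, w) by apply: sumr_ge0 => j _; apply: xp.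
  by move=> h2; rewrite (bigD1 i) //= xi; lra.
rewrite big1; last first.
  by move=> s hs'; case: (s =P s0) => // e; move: hs; rewrite -e hs'.
rewrite deg_inr big1 // => i _.
case: (x01 (i, w)) => h1; first by rewrite h1.
by move: hs; rewrite sS => /existsPn/(_ i); rewrite h1 eqxx.
Qed.

Lemma nat_lt_aux (a b a2 b2 : nat) : (a2 <= a)%N -> (b2 <= b)%N ->
  ((a2 < a) || (b2 < b))%N -> (a2 + b2 < a + b)%N.
Proof. move=> h1 h2 /orP[] h; lia. Qed.

Lemma perturb x d : feas x -> (forall e, e \notin Fr x -> d e = 0) ->
  (exists e, d e != 0) -> (forall v, v \notin NT x -> deg d v = 0) ->
  exists2 b, 0 < b & feas (fun e => x e + b * d e) /\
                     (mu (fun e => (x e + b * d e)%R) < mu x)%N.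
Proof.
move=> [xp xc] dF [e1 de1] dT.
pose act (z : (E + J)%type) := match z with
  | inl e => (e \in Fr x) && (d e < 0)
  | inr v => (v \in NT x) && (0 < deg d v) end.
pose val (z : (E + J)%type) := match z with
  | inl e => x e / (- d e)
  | inr v => ((cap v)%:R - deg x v) / deg d v end.
have inF e : d e != 0 -> e \in Fr x.
  by move=> h; apply: contraT => /dF h'; rewrite h' eqxx in h.
have [z0 az0] : exists z0, act z0.
  have e1F := inF e1 de1.
  case: (ltP (d e1) 0) => h.
    by exists (inl e1); rewrite /= e1F h.
  have dpos : 0 < d e1 by rewrite lt_neqAle eq_sym de1 h.
  case hv: (((inr e1.2 : J) \in NT x) && (0 < deg d (inr e1.2))).   
    by exists (inr (inr e1.2)); rewrite /= hv.
  have hle : deg d (inr e1.2) <= 0.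
    case hN: ((inr e1.2 : J) \in NT x); last by rewrite dT ?hN.
    by move: hv; rewrite hN /= => /negbT; rewrite -leNgt.
  case: (pickP (fun e2 => inc (inr e1.2) e2 && (d e2 < 0))) => [e2 /andP[ie2 de2]|hn].
    by exists (inl e2); rewrite /= de2 andbT inF // lt_eqF.
  exfalso; move: hle; rewrite /deg (bigD1 e1) /= ?eqxx //.
  have : 0 <= \sum_(e | (e.2 == e1.2) && (e != e1)) d e.
    apply: sumr_ge0 => e /andP[ie _]; move: (hn e); rewrite /= ie /= => /negbT.
    by rewrite -leNgt.
  lra.
case: (arg_minP val az0) => zb azb minb.
have valpos z : act z -> 0 < val z.
  case: z => [e|v] /= /andP[h1 h2].
    rewrite divr_gt0 //; last by rewrite oppr_gt0.
    by move: h1; rewrite inE => /andP[].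
  rewrite divr_gt0 // subr_gt0 lt_neqAle xc andbT.
  by move: h1; rewrite inE.
have bpos := valpos zb azb.
exists (val zb) => //.
set b := val zb.
have minb' : forall j, act j -> b <= val j by exact: minb.
have sF : Fr (fun e => x e + b * d e) \subset Fr x.
  apply/subsetP => e; apply: contraTT => eF.
  by move: (eF); rewrite !inE (dF e eF) mulr0 addr0.
have sN : NT (fun e => x e + b * d e) \subset NT x.
  apply/subsetP => v; apply: contraTT => hv.
  by move: (hv); rewrite !inE !negbK degL (dT v hv) mulr0 addr0.
split.
  split.
    move=> e; case: (ltP (d e) 0) => h.
      have eF : e \in Fr x by apply: inF; rewrite lt_eqF.
      have := minb' (inl e); rewrite /= eF h => /(_ isT).
      rewrite ler_pdivlMr ?oppr_gt0 // => hb.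
      lra.
    have : 0 <= b * d e by rewrite mulr_ge0 // ltW.
    have := xp e; lra.
  move=> v; rewrite degL.
  case: (boolP (v \in NT x)) => hv; last by rewrite (dT v hv) mulr0 addr0 xc.
  case: (ltP 0 (deg d v)) => h.
    have := minb' (inr v); rewrite /= hv h => /(_ isT).
    rewrite ler_pdivlMr // => hb.
    lra.
  have : b * deg d v <= 0 by rewrite mulr_ge0_le0 // ltW.
  have := xc v; lra.
rewrite /mu; apply: nat_lt_aux; [exact: subset_leq_card | exact: subset_leq_card |].
move: azb sF sN; rewrite /b; case Ez: zb => [e|v] /= /andP[h1 h2] sF sN.
  apply/orP; left; apply: proper_card; apply/properP; split => //.
  exists e => //; rewrite inE negb_and; apply/orP; left.
  have hd : d e != 0 by rewrite lt_eqF.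
  rewrite invrN mulrN mulNr -mulrA mulVf // mulr1 subrr ltxx //.
apply/orP; right; apply: proper_card; apply/properP; split => //.
exists v => //; rewrite inE negbK degL.
have hd : deg d v != 0 by rewrite gt_eqF.
by rewrite -mulrA mulVf // mulr1 addrC subrK.
Qed.

Lemma notouch d x v : (forall e, e \notin Fr x -> d e = 0) ->
  ~~ [exists e in Fr x, inc v e] -> deg d v = 0.
Proof.
move=> dF /existsPn h; apply: big1 => e ie; apply: dF.
by move: (h e); rewrite ie andbT.
Qed.

Lemma deg_kernel (d : E -> R) v : \sum_e (inc v e)%:R * d e = deg d v.
Proof.
rewrite /deg [RHS]big_mkcond; apply: eq_bigr => e _.
by case: (inc v e); rewrite ?mul1r ?mul0r.
Qed.

Lemma sum_cnt x :
  (\sum_v #|[set e in Fr x | inc v e]| = 2 * #|Fr x|)%N.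
Proof.
under eq_bigr do rewrite -sum1_card.
rewrite (exchange_big_dep (fun e => e \in Fr x)) /=; last first.
  by move=> v e _; rewrite inE => /andP[].
rewrite -sum1_card big_distrr /=.
apply: eq_bigr => e eF.
rewrite (eq_bigl (fun v => inc v e)); last by move=> v; rewrite inE eF.
rewrite big_sumType /= muln1.
rewrite (eq_bigl (pred1 (slot e))); last by move=> p; rewrite /= eq_sym.
rewrite (eq_bigl (pred1 e.2)); last by move=> w; rewrite /= eq_sym.
by rewrite !big_pred1_eq.
Qed.

Lemma cnt2 x v : feas x -> v \notin NT x -> [exists e in Fr x, inc v e] ->
  (2 <= #|[set e in Fr x | inc v e]|)%N.
Proof.
move=> hx tv /existsP[e1 /andP[e1F ie1]]; have [xp xc] := hx.
rewrite leqNgt; apply/negP => hlt.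
have h0 : (0 < #|[set e in Fr x | inc v e]|)%N.
  by apply/card_gt0P; exists e1; rewrite inE e1F ie1.
have c1 : #|[set e in Fr x | inc v e]| = 1%N.
  by move: hlt h0; case: #|_| => [|[|k]].
have hx01 e : inc v e -> e != e1 -> (x e = 0) \/ (x e = 1).
  move=> ie ne.
  have eF : e \notin Fr x.
    apply/negP => eF; move/eqP/cards1P: c1 => [e' he'].
    have : e \in [set e'] by rewrite -he' inE eF ie.
    have : e1 \in [set e'] by rewrite -he' inE e1F ie1.
    by rewrite !inE => /eqP h1 /eqP h2; rewrite h1 h2 eqxx in ne.
  move: eF; rewrite inE negb_and -!leNgt => /orP[h|h]; [left | right]; apply/eqP.
    by rewrite eq_le h xp.
  by rewrite eq_le h edge_le1.
have hsum : \sum_(e | inc v e && (e != e1)) x e =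
            (\sum_(e | inc v e && (e != e1)) (x e == 1%R : nat))%:R.
  rewrite natr_sum; apply: eq_bigr => e /andP[ie ne].
  by case: (hx01 e ie ne) => ->; rewrite ?eqxx // eq_sym oner_eq0.
move: hsum; set k := (\sum_(e | _) _)%N => hsum.
have tight : deg x v = (cap v)%:R by move: tv; rewrite inE negbK => /eqP.
move: tight; rewrite /deg (bigD1 e1) //= hsum => h.
have hxe1 : x e1 = (cap v)%:R - k%:R by rewrite -h addrK.
move: e1F; rewrite inE hxe1 => /andP[a b].
have a' : (k < cap v)%N by rewrite -(ltr_nat R) -subr_gt0.
have b' : (cap v)%:R < k%:R + 1 :> R by lra.
rewrite natr1 ltr_nat ltnS in b'.
by rewrite leqNgt a' in b'.
Qed.

Lemma exists_dir x : feas x -> Fr x != set0 ->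
  exists d : E -> R, [/\ (forall e, e \notin Fr x -> d e = 0),
    (exists e, d e != 0) & (forall v, v \notin NT x -> deg d v = 0)].
Proof.
move=> hx Fne.
have [e0 e0F] : exists e0, e0 \in Fr x by case/set0Pn: Fne => e he; exists e.
pose touch v := [exists e in Fr x, inc v e].
pose T := [set v | (v \notin NT x) && touch v].
pose Nn := [set v | (v \in NT x) && touch v].
have count : (2 * #|T| + #|Nn| <= 2 * #|Fr x|)%N.
  rewrite -sum_cnt.
  have -> : (2 * #|T| + #|Nn| = \sum_v ((v \in T) * 2 + (v \in Nn)))%N.
    rewrite big_split /= -big_distrl /= mulnC; congr (_ * _ + _)%N.
      by rewrite -sum1_card big_mkcond /=; apply: eq_bigr => v _; case: (v \in T).
    by rewrite -sum1_card big_mkcond /=; apply: eq_bigr => v _; case: (v \in Nn).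
  apply: leq_sum => v _.
  case hT: (v \in T).
    have hN : v \in Nn = false by move: hT; rewrite !inE => /andP[/negbTE ->].
    rewrite hN addn0 mul1n; apply: cnt2 => //; by move: hT; rewrite inE => /andP[].
  rewrite mul0n add0n; case hN: (v \in Nn) => //.
  move: hN; rewrite inE => /andP[_ /existsP[e /andP[eF ie]]].
  by apply/card_gt0P; exists e; rewrite inE eF ie.
case: (eqVneq Nn set0) => [N0|Nne].
  pose v0 : J := inr e0.2.
  have tv0 : v0 \in T.
    have touch0 : touch v0 by apply/existsP; exists e0; rewrite e0F /= eqxx.
    rewrite inE touch0 andbT; apply/negP => hN.
    have : v0 \in Nn by rewrite inE hN touch0.
    by rewrite N0 inE.
  have hlt : (#|T :\ v0| < #|Fr x|)%N.
    move: count; rewrite N0 cards0 addn0 (cardsD1 v0 T) tv0; lia.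
  have [d [dF dnz dK]] := kernel_ex (fun v e => (inc v e)%:R : R) hlt.
  have dK' v : v != v0 -> deg d v = 0.
    move=> nv; case tv: (touch v); last by apply: (notouch dF); rewrite /touch in tv; rewrite tv.
    have vT : v \in T.
      rewrite inE tv andbT; apply/negP => hN.
      have : v \in Nn by rewrite inE hN tv.
      by rewrite N0 inE.
    by rewrite -deg_kernel dK // in_setD1 nv vT.
  exists d; split => // v _.
  case: (eqVneq v v0) => [->|nv]; last exact: dK'.
  have s1 : \sum_e d e = 0.
    by rewrite -sum_inl big1 // => p _; apply: dK'.
  have := sum_inr d; rewrite s1 (bigD1 e0.2) //= big1 ?addr0 //.
  by move=> w nw; apply: dK'; rewrite /v0; apply: contra nw => /eqP [->].
have hlt : (#|T| < #|Fr x|)%N.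
  have : (0 < #|Nn|)%N by rewrite card_gt0.
  move: count; lia.
have [d [dF dnz dK]] := kernel_ex (fun v e => (inc v e)%:R : R) hlt.
exists d; split => // v tv.
case ht: (touch v); last by apply: (notouch dF); rewrite /touch in ht; rewrite ht.
by rewrite -deg_kernel dK // inE tv ht.
Qed.

Lemma decomp m : forall x, (mu x <= m)%N -> feas x ->
  exists sigma : {ffun profile n Omega -> R},
    lottery Pi K sigma /\ forall w, induced Pi sigma w = deg x (inr w).
Proof.
elim: m => [|m IH] x hm hx.
  apply: base => //; apply/eqP; rewrite -cards_eq0.
  by move: hm; rewrite /mu leqn0 addn_eq0 => /andP[].
case: (eqVneq (Fr x) set0) => [F0|Fne]; first exact: base.
have [d [dF dnz dT]] := exists_dir hx Fne.
have [b1 b1p [f1 m1]] := perturb hx dF dnz dT.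
have [b2 b2p [f2 m2]] : exists2 b, 0 < b & feas (fun e => x e + b * - d e) /\
                     (mu (fun e => (x e + b * - d e)%R) < mu x)%N.
  apply: perturb => //.
  - by move=> e /dF ->; rewrite oppr0.
  - by case: dnz => e he; exists e; rewrite oppr_eq0.
  - by move=> v /dT h; rewrite degN h oppr0.
have [s1 [[s1p [s1s s1u]] s1i]] := IH _ (leq_trans m1 hm) f1.
have [s2 [[s2p [s2s s2u]] s2i]] := IH _ (leq_trans m2 hm) f2.
pose l := b2 / (b1 + b2).
have l0 : 0 <= l by rewrite divr_ge0 // ltW // addr_gt0.
have l1 : l <= 1 by rewrite ler_pdivrMr ?addr_gt0 // mul1r lerDr ltW.
exists [ffun s => l * s1 s + (1 - l) * s2 s]; split; [split; [|split]|].
- by move=> s; rewrite ffunE addr_ge0 // mulr_ge0 // subr_ge0.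
- rewrite (eq_bigr (fun s => l * s1 s + (1 - l) * s2 s)); last by move=> s _; rewrite ffunE.
  by rewrite big_split /= -!mulr_sumr s1s s2s; lra.
- move=> s; rewrite ffunE => hs.
  case: (eqVneq (s1 s) 0) => h1; last exact: s1u.
  case: (eqVneq (s2 s) 0) => h2; last exact: s2u.
  by move: hs; rewrite h1 h2 !mulr0 addr0 eqxx.
- move=> w; rewrite /induced.
  rewrite (eq_bigr (fun s => l * s1 s + (1 - l) * s2 s)); last by move=> s _; rewrite ffunE.
  rewrite big_split /= -!mulr_sumr.
  have := s1i w; have := s2i w; rewrite /induced => -> ->.
  rewrite degL (degL x (fun e => - d e)) degN /l.
  field; rewrite lt0r_neq0 // addr_gt0 //.
Qed.

Lemma triv i : trivIset (Pi i).
Proof. by case/and3P: (hPi i). Qed.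

Lemma pbC i C w : C \in Pi i -> (pblock (Pi i) w == C) = (w \in C).
Proof.
move=> CP; apply/eqP/idP => [<-|wC]; first exact: memp.
exact: def_pblock (triv i) CP wC.
Qed.

Lemma pbP i w : pblock (Pi i) w \in Pi i.
Proof. by apply: pblock_mem; rewrite cov inE. Qed.

Lemma sum_pb i w (g : {set Omega} -> R) :
  \sum_C (if pblock (Pi i) w == C then g C else 0) = g (pblock (Pi i) w).
Proof.
rewrite -big_mkcond (eq_bigl (pred1 (pblock (Pi i) w))) ?big_pred1_eq //.
Qed.

Lemma sum_SL (F : SL -> R) : \sum_p F p = \sum_i \sum_C F (i, C).
Proof.
rewrite (pair_big xpredT xpredT (fun i C => F (i, C))) /=.
by apply: eq_bigr => [[i C]].
Qed.

Definition adjG (p : SL) (w : Omega) := pblock (Pi p.1) w == p.2.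
Definition capG (p : SL) : R := (K p.1)%:R.

Lemma Nb_sum W : \sum_(s in Nb adjG W) capG s =
  \sum_(i < n) (K i)%:R * (#|[set C in Pi i | C :&: W != set0]|)%:R.
Proof.
rewrite big_mkcond sum_SL; apply: eq_bigr => i _.
rewrite -big_mkcond /=.
rewrite (eq_bigl (fun C => C \in [set C in Pi i | C :&: W != set0])).
  by rewrite /capG /= sumr_const mulr_natr.
move=> C; rewrite inNb !inE /adjG /=.
apply/existsP/andP => [[w /andP[wW /eqP <-]]|[CP /set0Pn[w]]].
  split; first exact: pbP.
  by apply/set0Pn; exists w; rewrite inE memp wW.
rewrite inE => /andP[wC wW]; exists w; rewrite wW /=.
by rewrite pbC.
Qed.

Lemma compat_hall (f : Omega -> R) : compatible Pi K f <-> hallc adjG f capG.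
Proof.
by split => h W; have := h W; rewrite Nb_sum.
Qed.

Lemma hall_easy (f : Omega -> R) (x : SL -> Omega -> R) :
  (forall s w, 0 <= x s w) -> (forall s w, ~~ adjG s w -> x s w = 0) ->
  (forall w, f w <= \sum_s x s w) -> (forall s, \sum_w x s w <= capG s) ->
  hallc adjG f capG.
Proof.
move=> xp xa xf xc W.
apply: le_trans (ler_sum _ (fun w _ => xf w)) _.
rewrite exchange_big /= (bigID (mem (Nb adjG W))) /= [X in _ + X]big1 ?addr0.
  apply: ler_sum => s _; apply: le_trans (xc s).
  by rewrite [X in _ <= X](bigID (mem W)) /= lerDl sumr_ge0.
move=> s sN; apply: big1 => w wW; apply: xa; apply: contra sN => aw.
by rewrite inNb; apply/existsP; exists w; rewrite wW.
Qed.

Lemma lot_alloc (f : Omega -> R) (hf : forall w, 0 <= f w <= 1)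
  (sigma : {ffun profile n Omega -> R}) :
  lottery Pi K sigma -> (forall w, f w = induced Pi sigma w) ->
  exists alpha : 'I_n -> {set Omega} -> Omega -> R,
    fractional_allocation Pi K alpha /\ forall w, f w = generated Pi alpha w.
Proof.
move=> [sp [ss su]] fi.
pose pk (s : profile n Omega) w := [pick j | w \in s j (pblock (Pi j) w)].
have pkP s w i : pk s w == Some i -> w \in s i (pblock (Pi i) w).
  by rewrite /pk; case: pickP => // j hj /eqP [<-].
pose alpha (i : 'I_n) (C : {set Omega}) (w : Omega) :=
  \sum_(s | pk s w == Some i) sigma s.
exists alpha; split.
  move=> i C CP; split; first by move=> w _; apply: sumr_ge0.
  rewrite /alpha (exchange_big_dep xpredT) //=.
  apply: (@le_trans _ _ (\sum_s sigma s * (K i)%:R)); last first.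
    by rewrite -mulr_suml ss mul1r.
  apply: ler_sum => s _.
  case: (eqVneq (sigma s) 0) => [->|nz].
    by rewrite big1 ?mul0r.
  have [sub cardK] := su s nz i C CP.
  rewrite (eq_bigl (fun w => w \in [set w in C | pk s w == Some i])); last first.
    by move=> w; rewrite inE.
  rewrite sumr_const -[sigma s *+ _]mulr_natr; apply: ler_wpM2l => //; rewrite ler_nat.
  apply: leq_trans cardK; apply: subset_leq_card; apply/subsetP => w.
  rewrite inE => /andP[wC /pkP].
  by rewrite (def_pblock (triv i) CP wC).
move=> w.
have hsum : \sum_i alpha i (pblock (Pi i) w) w = f w.
  rewrite fi /alpha /induced.
  under eq_bigr do rewrite big_mkcond.
  rewrite exchange_big [RHS]big_mkcond /=; apply: eq_bigr => s _.
  rewrite /searched /pk; case: pickP => [j hj|hn].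
    have -> : [exists i, w \in s i (pblock (Pi i) w)] by apply/existsP; exists j.
    rewrite -big_mkcond (eq_bigl (pred1 j)) ?big_pred1_eq // => i.
  have -> : [exists i, w \in s i (pblock (Pi i) w)] = false.
    by apply/existsP => -[j hj]; rewrite hn in hj.
  by rewrite big1.
rewrite /generated hsum; apply/esym/min_idPr.
by case/andP: (hf w).
Qed.

Lemma alloc_compat (f : Omega -> R) (alpha : 'I_n -> {set Omega} -> Omega -> R) :
  fractional_allocation Pi K alpha -> (forall w, f w = generated Pi alpha w) ->
  compatible Pi K f.
Proof.
move=> ha fg; apply/compat_hall.
pose x (p : SL) w := if pblock (Pi p.1) w == p.2 then alpha p.1 p.2 w else 0.
apply: (@hall_easy f x).
- move=> [i C] w; rewrite /x /=; case: eqP => [<-|//].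
  by have [h _] := ha i _ (pbP i w); apply: h; apply: memp.
- by move=> [i C] w; rewrite /x /adjG /= => /negbTE ->.
- move=> w; rewrite sum_SL /x /=.
  rewrite (eq_bigr (fun i => alpha i (pblock (Pi i) w) w)); last first.
    by move=> i _; rewrite (sum_pb i w (fun C => alpha i C w)).
  by rewrite fg /generated ge_min lexx orbT.
- move=> [i C]; rewrite /x /capG /=.
  case CP: (C \in Pi i); last first.
    rewrite big1 // => w _; case: eqP => // e.
    by move: (pbP i w); rewrite e CP.
  have [_ h] := ha i C CP; apply: le_trans h.
  rewrite [X in _ <= X]big_mkcond le_eqVlt; apply/orP; left; apply/eqP.
  by apply: eq_bigr => w _; rewrite pbC.
Qed.

Lemma compat_alloc (f : Omega -> R) (hf : forall w, 0 <= f w <= 1) :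
  compatible Pi K f ->
  exists alpha : 'I_n -> {set Omega} -> Omega -> R,
    fractional_allocation Pi K alpha /\ forall w, f w = generated Pi alpha w.
Proof.
move/compat_hall => hh.
have [x [xp xa xc xr]] := @hall_sol R _ _ adjG (msr f capG) f capG (leqnn _)
  (fun w => proj1 (andP (hf w))) (fun s => ler0n _ _) hh.
exists (fun i C w => x (i, C) w); split.
  move=> i C CP; split; first by move=> w _; apply: xp.
  apply: le_trans (xr (i, C)).
  by rewrite [X in _ <= X](bigID (mem C)) /= lerDl sumr_ge0.
move=> w; rewrite /generated.
have -> : \sum_i x (i, pblock (Pi i) w) w = f w.
  rewrite -xc sum_SL; apply: eq_bigr => i _.
  rewrite (bigD1 (pblock (Pi i) w)) //= big1 ?addr0 // => C nC.
  by apply: xa; rewrite /adjG /= eq_sym.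
by apply/esym/min_idPr; case/andP: (hf w).
Qed.

Lemma alloc_lot (f : Omega -> R) (hf : forall w, 0 <= f w <= 1)
  (alpha : 'I_n -> {set Omega} -> Omega -> R) :
  fractional_allocation Pi K alpha -> (forall w, f w = generated Pi alpha w) ->
  exists sigma : {ffun profile n Omega -> R},
    lottery Pi K sigma /\ forall w, f w = induced Pi sigma w.
Proof.
move=> ha fg.
have ap e : 0 <= alpha e.1 (pblock (Pi e.1) e.2) e.2.
  by have [h _] := ha e.1 _ (pbP e.1 e.2); apply: h; apply: memp.
pose Sg w := \sum_i alpha i (pblock (Pi i) w) w.
have Sg0 w : 0 <= Sg w by apply: sumr_ge0 => i _; apply: (ap (i, w)).
have fS w : f w <= Sg w by rewrite fg /generated ge_min lexx orbT.
pose r w := if Sg w == 0 then 0 else f w / Sg w.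
have r0 w : 0 <= r w.
  by rewrite /r; case: ifP => // _; rewrite divr_ge0 //; case/andP: (hf w).
have r1 w : r w <= 1.
  rewrite /r; case: eqP => // h.
  by rewrite ler_pdivrMr ?mul1r // lt_neqAle eq_sym Sg0 andbT; apply/eqP.
have rS w : r w * Sg w = f w.
  rewrite /r; case: eqP => [h|h]; last by rewrite mulfVK //; apply/eqP.
  rewrite mul0r; move: (fS w); rewrite h => h1; case/andP: (hf w) => hf0 _.
  by apply/eqP; rewrite eq_le h1 hf0.
pose xD (e : E) := alpha e.1 (pblock (Pi e.1) e.2) e.2 * r e.2.
have degw w : deg xD (inr w) = f w.
  by rewrite deg_inr /xD /= -mulr_suml mulrC rS.
have fx : feas xD.
  split; first by move=> e; rewrite mulr_ge0.
  case=> [[i C]|w]; last by rewrite degw /=; case/andP: (hf w).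
  rewrite deg_inl /xD /=.
  case CP: (C \in Pi i); last first.
    rewrite big1 // => w /eqP e.
    by move: (pbP i w); rewrite e CP.
  have [_ h] := ha i C CP; apply: le_trans h.
  rewrite (eq_bigl (fun w => w \in C)); last by move=> w; rewrite pbC.
  apply: ler_sum => w wC; rewrite (def_pblock (triv i) CP wC).
  rewrite -[X in _ <= X]mulr1 ler_wpM2l //.
  by have [h' _] := ha i C CP; apply: h'.
have [sigma [hl hi]] := decomp (leqnn (mu xD)) fx.
by exists sigma; split => // w; rewrite hi degw.
Qed.

End Decomp.


Theorem proposition2 (R : realType) (n : nat) (Omega : finType)
  (Pi : 'I_n -> {set {set Omega}}) (K : 'I_n -> nat)
  (hPi : forall i : 'I_n, partition (Pi i) [set: Omega])
  (f : Omega -> R) (hf : forall w, 0 <= f w <= 1) :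
  ((exists sigma : {ffun profile n Omega -> R},
      lottery Pi K sigma /\ forall w, f w = induced Pi sigma w)
   <-> compatible Pi K f)
  /\
  (compatible Pi K f
   <-> (exists alpha : 'I_n -> {set Omega} -> Omega -> R,
          fractional_allocation Pi K alpha /\ forall w, f w = generated Pi alpha w)).
Proof.

split; split.
- move=> [sigma [hl hi]].
  have [alpha [ha hg]] := lot_alloc hPi hf hl hi.
  exact (alloc_compat hPi ha hg).
- move=> hc; have [alpha [ha hg]] := compat_alloc hPi hf hc.
  exact (alloc_lot hPi hf ha hg).
- by move=> hc; exact (compat_alloc hPi hf hc).
- move=> [alpha [ha hg]]; exact (alloc_compat hPi ha hg).
Qed.
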